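(* Let $f_0$ be a positive integer. There exists a toric line arrangement in $\mathbb{T}^2$ consisting of exactly $3$ lines with $f_0$ vertices and $f_2=2f_0$ chambers if and only if $f_0$ is odd.
   Context: Let $\mathbb{T}^2=\mathbb{R}^2/\mathbb{Z}^2$ with quotient map $\pi:\mathbb{R}^2\to\mathbb{T}^2$. A toric line is the image $\pi(L)$ of a line $L=\{(x,y)\in\mathbb{R}^2: ax+by=c\}$ with $a,b\in\mathbb{Z}$ coprime and $c\in\mathbb{R}$; it is said to be of type $(a,b)$. A toric line arrangement is a finite set $\mathcal{A}=\{l_1,\dots,l_n\}$ of distinct toric lines which is essential, i.e. not all of its lines are of the same type (not all lines are parallel). The vertices of $\mathcal{A}$ are the points of $\mathbb{T}^2$ lying on at least two lines of $\mathcal{A}$; the chambers are the connected components of $\mathbb{T}^2\setminus\bigcup_i l_i$. We write $f_0$ and $f_2$ for the numbers of vertices and chambers. *)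

(* Defs.v *)
From Stdlib Require Import Reals ZArith List.
Import ListNotations.
Open Scope R_scope.

(* A line a x + b y = c of R^2, given by (a, b, c). *)
Definition tline : Type := (Z * Z * R)%type.

Definition la (l : tline) : Z := fst (fst l).
Definition lb (l : tline) : Z := snd (fst l).
Definition lc (l : tline) : R := snd l.

Definition valid_tline (l : tline) : Prop := Z.gcd (la l) (lb l) = 1%Z.

(* A point (x,y) of R^2 represents a point of T^2 = R^2/Z^2;
   pi(x,y) lies on the toric line pi(L) iff some integer translate of (x,y)
   lies on L. *)
Definition on_tline (l : tline) (x y : R) : Prop :=
  exists m n : Z, IZR (la l) * (x + IZR m) + IZR (lb l) * (y + IZR n) = lc l.

Definition same_torus_pt (p q : R * R) : Prop :=
  exists m n : Z, fst q = fst p + IZR m /\ snd q = snd p + IZR n.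

Definition same_tline (l l' : tline) : Prop :=
  forall x y, on_tline l x y <-> on_tline l' x y.

Definition parallel (l l' : tline) : Prop :=
  (la l * lb l' - la l' * lb l = 0)%Z.

Definition toric_arrangement (A : list tline) : Prop :=
  Forall valid_tline A /\
  ForallOrdPairs (fun l l' => ~ same_tline l l') A /\
  (exists l l', In l A /\ In l' A /\ ~ parallel l l').

Definition on_arr (A : list tline) (x y : R) : Prop :=
  exists l, In l A /\ on_tline l x y.

Definition is_vertex (A : list tline) (p : R * R) : Prop :=
  exists l l', In l A /\ In l' A /\ ~ same_tline l l' /\
    on_tline l (fst p) (snd p) /\ on_tline l' (fst p) (snd p).

Definition num_vertices (A : list tline) (f0 : nat) : Prop :=
  exists vs : list (R * R),
    length vs = f0 /\
    (forall v, In v vs -> is_vertex A v) /\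
    ForallOrdPairs (fun v w => ~ same_torus_pt v w) vs /\
    (forall p, is_vertex A p -> exists v, In v vs /\ same_torus_pt v p).

(* pi(p) and pi(q) lie in the same (path-)component of T^2 minus the lines:
   there is a continuous path in R^2 from p to an integer translate of q
   avoiding the preimage of the union of the lines. *)
Definition same_chamber (A : list tline) (p q : R * R) : Prop :=
  exists g1 g2 : R -> R,
    continuity g1 /\ continuity g2 /\
    g1 0 = fst p /\ g2 0 = snd p /\
    same_torus_pt (g1 1, g2 1) q /\
    (forall t, 0 <= t <= 1 -> ~ on_arr A (g1 t) (g2 t)).

Definition num_chambers (A : list tline) (f2 : nat) : Prop :=
  exists cs : list (R * R),
    length cs = f2 /\
    (forall c, In c cs -> ~ on_arr A (fst c) (snd c)) /\
    ForallOrdPairs (fun c d => ~ same_chamber A c d) cs /\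
    (forall p, ~ on_arr A (fst p) (snd p) ->
       exists c, In c cs /\ same_chamber A c p).

(* Main.v *)
Require Import Defs.
From Stdlib Require Import Reals ZArith List Arith Lia Lra Psatz Classical.
Import ListNotations.
Open Scope R_scope.

Lemma count_le {A B : Type} (R : B -> A -> Prop) (D : A -> A -> Prop)
  (ws : list A) (vs : list B) :
  ForallOrdPairs D ws ->
  (forall v w w', R v w -> R v w' -> D w w' -> False) ->
  (forall w, In w ws -> exists v, In v vs /\ R v w) ->
  (length ws <= length vs)%nat.
Proof.
  intros H. revert vs. induction H as [|w ws Hw Hws IH]; intros vs HR Hc.
  - simpl; lia.
  - destruct (Hc w (or_introl eq_refl)) as [v [Hv Rv]].
    destruct (in_split _ _ Hv) as [l1 [l2 ->]].
    assert (length ws <= length (l1 ++ l2))%nat.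
    { apply IH; auto.
      intros w' Hw'. destruct (Hc w' (or_intror Hw')) as [v' [Hv' Rv']].
      apply in_app_or in Hv'. destruct Hv' as [Hv'|[Hv'|Hv']].
      - exists v'; split; auto; apply in_or_app; auto.
      - subst v'. exfalso. eapply HR; [exact Rv| exact Rv'|].
        rewrite Forall_forall in Hw. apply Hw; auto.
      - exists v'; split; auto; apply in_or_app; auto. }
    rewrite !length_app in *. simpl. lia.
Qed.

Lemma FOP_map {A B : Type} (R : B -> B -> Prop) (f : A -> B) (l : list A) :
  ForallOrdPairs (fun x y => R (f x) (f y)) l -> ForallOrdPairs R (map f l).
Proof.
  induction 1; simpl; constructor; auto.
  rewrite Forall_forall in *. intros y Hy. apply in_map_iff in Hy.
  destruct Hy as [x [<- Hx]]. auto.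
Qed.

Lemma FOP_app {A : Type} (R : A -> A -> Prop) (l1 l2 : list A) :
  ForallOrdPairs R l1 -> ForallOrdPairs R l2 ->
  (forall x y, In x l1 -> In y l2 -> R x y) -> ForallOrdPairs R (l1 ++ l2).
Proof.
  induction 1; intros H2 Hx; simpl; auto.
  constructor.
  - rewrite Forall_forall in *. intros y Hy. apply in_app_or in Hy.
    destruct Hy; auto. apply Hx; simpl; auto.
  - apply IHForallOrdPairs; auto. intros; apply Hx; simpl; auto.
Qed.

Lemma FOP_nodup {A : Type} (R : A -> A -> Prop) (l : list A) :
  NoDup l -> (forall x y, In x l -> In y l -> x <> y -> R x y) ->
  ForallOrdPairs R l.
Proof.
  induction 1 as [|x l Hx Hl IH]; intros H; constructor.
  - rewrite Forall_forall. intros y Hy. apply H; simpl; auto.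
    intro; subst; auto.
  - apply IH. intros; apply H; simpl; auto.
Qed.
Definition Lf (l : tline) (x y : R) : R := IZR (la l) * x + IZR (lb l) * y - lc l.
Definition dd (l l' : tline) : Z := (la l * lb l' - la l' * lb l)%Z.

Lemma on_tline_int l x y : on_tline l x y -> exists N : Z, Lf l x y = IZR N.
Proof.
  intros [m [n H]]. exists (- (la l * m + lb l * n))%Z. unfold Lf.
  rewrite opp_IZR, plus_IZR, !mult_IZR. lra.
Qed.

Lemma int_on_tline l x y (N : Z) : valid_tline l -> Lf l x y = IZR N -> on_tline l x y.
Proof.
  intros Hv HN. unfold valid_tline in Hv.
  destruct (Z.gcd_bezout _ _ _ Hv) as [u [v Huv]].
  exists (- N * u)%Z, (- N * v)%Z. unfold Lf in HN.
  rewrite !mult_IZR, !opp_IZR.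
  assert (E : IZR u * IZR (la l) + IZR v * IZR (lb l) = 1).
  { rewrite <- !mult_IZR, <- plus_IZR, Huv. reflexivity. }
  transitivity ((IZR (la l) * x + IZR (lb l) * y - lc l) - IZR N * (IZR u * IZR (la l) + IZR v * IZR (lb l)) + lc l);
  [ring|]. rewrite HN, E. ring.
Qed.

Lemma not_int_between (k N : Z) (r : R) : IZR k < r < IZR k + 1 -> r <> IZR N.
Proof.
  intros [H1 H2] ->. apply lt_IZR in H1.
  assert (IZR N < IZR (k+1)) by (rewrite plus_IZR; lra). apply lt_IZR in H. lia.
Qed.

Lemma on_tline_shift l x y (m n : Z) : on_tline l x y -> on_tline l (x + IZR m) (y + IZR n).
Proof.
  intros [m' [n' H]]. exists (m' - m)%Z, (n' - n)%Z. rewrite !minus_IZR. lra.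
Qed.

Lemma same_pt_refl p : same_torus_pt p p.
Proof. exists 0%Z, 0%Z. simpl. lra. Qed.

Lemma same_pt_sym p q : same_torus_pt p q -> same_torus_pt q p.
Proof. intros [m [n [H1 H2]]]. exists (-m)%Z, (-n)%Z. rewrite !opp_IZR. lra. Qed.

Lemma same_pt_trans p q r : same_torus_pt p q -> same_torus_pt q r -> same_torus_pt p r.
Proof.
  intros [m [n [H1 H2]]] [m' [n' [H3 H4]]]. exists (m+m')%Z, (n+n')%Z.
  rewrite !plus_IZR. lra.
Qed.

Lemma on_tline_same l p q : same_torus_pt p q -> on_tline l (fst p) (snd p) -> on_tline l (fst q) (snd q).
Proof.
  intros [m [n [H1 H2]]] H. rewrite H1, H2. apply on_tline_shift; auto.
Qed.

Lemma IZR_between_eq (a b : Z) : IZR a - IZR b < 1 -> IZR b - IZR a < 1 -> a = b.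
Proof.
  intros H1 H2. rewrite <- minus_IZR in H1, H2.
  apply lt_IZR in H1; apply lt_IZR in H2. lia.
Qed.

Lemma floor_ex (r : R) (Hr : forall N : Z, r <> IZR N) : exists k : Z, IZR k < r < IZR k + 1.
Proof.
  destruct (base_Int_part r) as [H1 H2]. exists (Int_part r). split; [|lra].
  destruct H1; auto. exfalso; apply (Hr (Int_part r)); auto.
Qed.

Lemma convex_between (k A B t : R) : 0 <= t <= 1 -> k < A < k + 1 -> k < B < k + 1 ->
  k < (1 - t) * A + t * B < k + 1.
Proof.
  intros Ht HA HB.
  assert (E : (1 - t) * A + t * B = A + t * (B - A)) by ring. rewrite E.
  destruct (Rle_or_lt A B).
  - assert (0 <= t * (B - A)) by (apply Rmult_le_pos; lra).
    assert (t * (B - A) <= 1 * (B - A)) by (apply Rmult_le_compat_r; lra). lra.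
  - assert (t * (B - A) <= 0) by nra. assert (t * (B - A) >= B - A) by nra. lra.
Qed.

Lemma cell_same_chamber (A : list tline) (c c' : R * R) (m n : Z) :
  (forall l, In l A -> exists k : Z,
     IZR k < Lf l (fst c) (snd c) < IZR k + 1 /\
     IZR k < Lf l (fst c' - IZR m) (snd c' - IZR n) < IZR k + 1) ->
  same_chamber A c c'.
Proof.
  intros H.
  set (x1 := fst c' - IZR m); set (y1 := snd c' - IZR n).
  exists (fun t => fst c + t * (x1 - fst c)), (fun t => snd c + t * (y1 - snd c)).
  repeat split.
  - reg.
  - reg.
  - simpl; ring.
  - simpl; ring.
  - exists m, n. simpl. unfold x1, y1. split; ring.
  - intros t Ht [l [Hl Hon]].
    destruct (H l Hl) as [k [Hk1 Hk2]].
    destruct (on_tline_int _ _ _ Hon) as [N HN].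
    assert (E : Lf l (fst c + t * (x1 - fst c)) (snd c + t * (y1 - snd c)) =
                (1 - t) * Lf l (fst c) (snd c) + t * Lf l x1 y1) by (unfold Lf; ring).
    rewrite E in HN.
    apply (not_int_between k N (((1 - t) * Lf l (fst c) (snd c) + t * Lf l x1 y1))); auto.
    fold x1 y1 in Hk2. apply convex_between; auto.
Qed.

Lemma floor_preserved (h : R -> R) (k : Z) :
  continuity h -> (forall t, 0 <= t <= 1 -> forall N : Z, h t <> IZR N) ->
  IZR k < h 0 < IZR k + 1 -> IZR k < h 1 < IZR k + 1.
Proof.
  intros Hc Hn [H1 H2]. split.
  - destruct (Rlt_or_le (IZR k) (h 1)) as [|Hle]; auto. exfalso.
    destruct Hle as [Hlt|Heq].
    + destruct (IVT (fun t => IZR k - h t) 0 1) as [z [Hz Hz0]].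
      * (reg; try exact Hc).
      * lra.
      * lra.
      * lra.
      * apply (Hn z Hz k). lra.
    + apply (Hn 1 ltac:(lra) k). lra.
  - destruct (Rlt_or_le (h 1) (IZR k + 1)) as [|Hle]; auto. exfalso.
    destruct Hle as [Hlt|Heq].
    + destruct (IVT (fun t => h t - (IZR k + 1)) 0 1) as [z [Hz Hz0]].
      * (reg; try exact Hc).
      * lra.
      * lra.
      * lra.
      * apply (Hn z Hz (k+1)%Z). rewrite plus_IZR. lra.
    + apply (Hn 1 ltac:(lra) (k+1)%Z). rewrite plus_IZR. lra.
Qed.

Lemma chamber_cell (A : list tline) (c c' : R * R) :
  Forall valid_tline A ->
  same_chamber A c c' ->
  exists m n : Z, forall l, In l A -> forall k : Z,
     IZR k < Lf l (fst c) (snd c) < IZR k + 1 ->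
     IZR k < Lf l (fst c') (snd c') - IZR (la l * m + lb l * n) < IZR k + 1.
Proof.
  intros HV [g1 [g2 [C1 [C2 [E1 [E2 [[m [n [F1 F2]]] Hav]]]]]]].
  exists m, n. intros l Hl k Hk.
  assert (Hlv : valid_tline l) by (rewrite Forall_forall in HV; auto).
  assert (Eq : Lf l (fst c') (snd c') - IZR (la l * m + lb l * n) = Lf l (g1 1) (g2 1)).
  { rewrite F1, F2. unfold Lf. simpl. rewrite plus_IZR, !mult_IZR. ring. }
  rewrite Eq.
  apply (floor_preserved (fun t => Lf l (g1 t) (g2 t))).
  - unfold Lf. reg; auto.
  - intros t Ht N HN. apply (Hav t Ht). exists l. split; auto.
    eapply int_on_tline; eauto.
  - rewrite E1, E2. auto.
Qed.

Lemma coef_bound (w : Z) (t : R) : 0 < t < 1 ->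
  (IZR (Z.min w 0) <= IZR w * t <= IZR (Z.max w 0)) /\
  ((w <> 0)%Z -> IZR (Z.min w 0) < IZR w * t < IZR (Z.max w 0)).
Proof.
  intros Ht. destruct (Z_le_gt_dec 0 w) as [Hw|Hw].
  - rewrite Z.min_r, Z.max_l by lia. apply IZR_le in Hw.
    split; [split; nra|]. intros Hn. assert (IZR w <> 0) by (intro E; apply eq_IZR in E; lia).
    split; nra.
  - rewrite Z.min_l, Z.max_r by lia. assert (IZR w < 0) by (apply IZR_lt; lia).
    split; [split; nra|]. intros _. split; nra.
Qed.

Lemma lattice_alg (a b u v a2 b2 a3 b3 p2 p3 g x0 y0 q23 : Z)
  (k1 k2 k3 k1' k2' k3' rho : Z) :
  (u * a + v * b = 1)%Z ->
  (a * b2 - a2 * b = p2 * g)%Z -> (a * b3 - a3 * b = p3 * g)%Z ->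
  (x0 * p2 + y0 * p3 = 1)%Z ->
  (q23 = (a2 * u + b2 * v) * p3 - (a3 * u + b3 * v) * p2)%Z ->
  (q23 * k1 - p3 * k2 + p2 * k3 = q23 * k1' - p3 * k2' + p2 * k3')%Z ->
  (x0 * ((k2' - k2) - (a2 * u + b2 * v) * (k1' - k1)) + y0 * ((k3' - k3) - (a3 * u + b3 * v) * (k1' - k1)) = g * rho)%Z ->
  exists m n : Z, (k1' = k1 + (a * m + b * n) /\ k2' = k2 + (a2 * m + b2 * n) /\ k3' = k3 + (a3 * m + b3 * n))%Z.
Proof.
  intros Huv Hb2 Hb3 Hxy Hq Hs Ht.
  set (al2 := (a2 * u + b2 * v)%Z) in *. set (al3 := (a3 * u + b3 * v)%Z) in *.
  set (d1 := (k1' - k1)%Z) in *.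
  set (e2 := ((k2' - k2) - al2 * d1)%Z) in *. set (e3 := ((k3' - k3) - al3 * d1)%Z) in *.
  assert (He : (p2 * e3 = p3 * e2)%Z).
  { unfold e2, e3, d1. rewrite Hq in Hs. lia. }
  assert (E2 : e2 = (p2 * g * rho)%Z).
  { transitivity (e2 * (x0 * p2 + y0 * p3))%Z; [rewrite Hxy; ring|].
    transitivity (p2 * (x0 * e2 + y0 * e3))%Z.
    - transitivity (x0 * p2 * e2 + y0 * (p3 * e2))%Z; [ring|]. rewrite <- He. ring.
    - rewrite Ht. ring. }
  assert (E3 : e3 = (p3 * g * rho)%Z).
  { transitivity (e3 * (x0 * p2 + y0 * p3))%Z; [rewrite Hxy; ring|].
    transitivity (p3 * (x0 * e2 + y0 * e3))%Z.
    - transitivity (x0 * (p2 * e3) + y0 * p3 * e3)%Z; [ring|]. rewrite He. ring.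
    - rewrite Ht. ring. }
  exists (u * d1 - b * rho)%Z, (v * d1 + a * rho)%Z.
  split; [|split].
  - transitivity (k1 + d1 * (u * a + v * b))%Z; [rewrite Huv; unfold d1; ring| ring].
  - assert (k2' = k2 + e2 + al2 * d1)%Z by (unfold e2; ring).
    rewrite H, E2, <- Hb2. unfold al2. ring.
  - assert (k3' = k3 + e3 + al3 * d1)%Z by (unfold e3; ring).
    rewrite H, E3, <- Hb3. unfold al3. ring.
Qed.

Ltac izr := repeat (first [rewrite plus_IZR | rewrite minus_IZR | rewrite mult_IZR | rewrite opp_IZR]).

Lemma off_floor (l : tline) (x y : R) : valid_tline l -> ~ on_tline l x y ->
  exists k : Z, IZR k < Lf l x y < IZR k + 1.
Proof.
  intros Hv Hn. apply floor_ex. intros N HN. apply Hn. eapply int_on_tline; eauto.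
Qed.

Lemma chamber_bound (l1 l2 l3 : tline) (cs : list (R * R)) :
  valid_tline l1 -> valid_tline l2 -> valid_tline l3 ->
  (dd l1 l2 <> 0 \/ dd l1 l3 <> 0)%Z ->
  (forall c, In c cs -> ~ on_arr [l1; l2; l3] (fst c) (snd c)) ->
  ForallOrdPairs (fun c d => ~ same_chamber [l1; l2; l3] c d) cs ->
  (Z.of_nat (length cs) <= Z.abs (dd l1 l2) + Z.abs (dd l1 l3) + Z.abs (dd l2 l3))%Z /\
  ((exists x y, on_tline l1 x y /\ on_tline l2 x y /\ on_tline l3 x y) ->
   (Z.of_nat (length cs) <= Z.abs (dd l1 l2) + Z.abs (dd l1 l3) + Z.abs (dd l2 l3)
                              - Z.gcd (dd l1 l2) (dd l1 l3))%Z).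
Proof.
  intros V1 V2 V3 Hnz Hoff Hpw.
  pose proof V1 as V1'. unfold valid_tline in V1'.
  destruct (Z.gcd_bezout _ _ _ V1') as [u [v Huv]].
  destruct l1 as [[a b] c1]; destruct l2 as [[a2 b2] c2]; destruct l3 as [[a3 b3] c3].
  unfold dd, la, lb in *; simpl in *.
  set (g := Z.gcd (a * b2 - a2 * b) (a * b3 - a3 * b)) in *.
  assert (Hg0 : (0 <= g)%Z) by apply Z.gcd_nonneg.
  assert (Hgpos : (0 < g)%Z).
  { destruct (Z.eq_dec g 0) as [E|E]; [|lia]. apply Z.gcd_eq_0 in E. lia. }
  destruct (Z.gcd_divide_l (a * b2 - a2 * b) (a * b3 - a3 * b)) as [p2 Hp2]. fold g in Hp2.
  destruct (Z.gcd_divide_r (a * b2 - a2 * b) (a * b3 - a3 * b)) as [p3 Hp3]. fold g in Hp3.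
  destruct (Z.gcd_bezout (a * b2 - a2 * b) (a * b3 - a3 * b) g eq_refl) as [x0 [y0 Hxy0]].
  assert (Hxy : (x0 * p2 + y0 * p3 = 1)%Z).
  { rewrite Hp2, Hp3 in Hxy0. nia. }
  set (al2 := (a2 * u + b2 * v)%Z). set (al3 := (a3 * u + b3 * v)%Z).
  set (q23 := (al2 * p3 - al3 * p2)%Z).
  assert (Hd23 : (a2 * b3 - a3 * b2 = q23 * g)%Z).
  { unfold q23, al2, al3.
    transitivity ((u * a + v * b) * (a2 * b3 - a3 * b2))%Z; [rewrite Huv; ring|].
    transitivity ((a2 * u + b2 * v) * (p3 * g) - (a3 * u + b3 * v) * (p2 * g))%Z;
      [rewrite <- Hp2, <- Hp3; ring| ring]. }
  assert (Row1 : (q23 * a - p3 * a2 + p2 * a3 = 0)%Z).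
  { assert (E : ((q23 * a - p3 * a2 + p2 * a3) * g = 0)%Z).
    { transitivity ((a2 * b3 - a3 * b2) * a - (p3 * g) * a2 + (p2 * g) * a3)%Z;
        [rewrite Hd23; ring|]. rewrite <- Hp2, <- Hp3. ring. }
    apply Z.mul_eq_0 in E. lia. }
  assert (Row2 : (q23 * b - p3 * b2 + p2 * b3 = 0)%Z).
  { assert (E : ((q23 * b - p3 * b2 + p2 * b3) * g = 0)%Z).
    { transitivity ((a2 * b3 - a3 * b2) * b - (p3 * g) * b2 + (p2 * g) * b3)%Z;
        [rewrite Hd23; ring|]. rewrite <- Hp2, <- Hp3. ring. }
    apply Z.mul_eq_0 in E. lia. }
  set (l1 := (a, b, c1)). set (l2 := (a2, b2, c2)). set (l3 := (a3, b3, c3)).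
  set (H' := - (IZR q23 * c1 - IZR p3 * c2 + IZR p2 * c3)).
  assert (Hid : forall x y, IZR q23 * Lf l1 x y - IZR p3 * Lf l2 x y + IZR p2 * Lf l3 x y = H').
  { intros x y. unfold Lf, H', la, lb, lc; simpl.
    transitivity (H' + x * IZR (q23 * a - p3 * a2 + p2 * a3) + y * IZR (q23 * b - p3 * b2 + p2 * b3)).
    - unfold H'. izr. ring.
    - rewrite Row1, Row2. unfold H'. ring. }
  set (P' := (Z.max q23 0 + Z.max (- p3) 0 + Z.max p2 0)%Z).
  set (Q' := (Z.min q23 0 + Z.min (- p3) 0 + Z.min p2 0)%Z).
  assert (Hp23 : (p2 <> 0 \/ p3 <> 0)%Z).
  { destruct Hnz as [E|E]; [left|right]; intro; subst; apply E; lia. }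
  set (cellp := fun (c : R * R) (k1 k2 k3 : Z) =>
     IZR k1 < Lf l1 (fst c) (snd c) < IZR k1 + 1 /\
     IZR k2 < Lf l2 (fst c) (snd c) < IZR k2 + 1 /\
     IZR k3 < Lf l3 (fst c) (snd c) < IZR k3 + 1).
  assert (Hfl : forall c, In c cs -> exists k1 k2 k3, cellp c k1 k2 k3).
  { intros c Hc. pose proof (Hoff c Hc) as Ho.
    assert (N1 : ~ on_tline l1 (fst c) (snd c)) by (intro; apply Ho; exists l1; simpl; auto).
    assert (N2 : ~ on_tline l2 (fst c) (snd c)) by (intro; apply Ho; exists l2; simpl; auto).
    assert (N3 : ~ on_tline l3 (fst c) (snd c)) by (intro; apply Ho; exists l3; simpl; auto).
    destruct (off_floor _ _ _ V1 N1) as [k1 K1].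
    destruct (off_floor _ _ _ V2 N2) as [k2 K2].
    destruct (off_floor _ _ _ V3 N3) as [k3 K3].
    exists k1, k2, k3. exact (conj K1 (conj K2 K3)). }
  set (sf := fun k1 k2 k3 : Z => (q23 * k1 - p3 * k2 + p2 * k3)%Z).
  assert (Hsb : forall c k1 k2 k3, cellp c k1 k2 k3 ->
            H' - IZR P' < IZR (sf k1 k2 k3) < H' - IZR Q').
  { intros c k1 k2 k3 [K1 [K2 K3]].
    set (t1 := Lf l1 (fst c) (snd c) - IZR k1).
    set (t2 := Lf l2 (fst c) (snd c) - IZR k2).
    set (t3 := Lf l3 (fst c) (snd c) - IZR k3).
    assert (E : IZR (sf k1 k2 k3) = H' - (IZR q23 * t1 + IZR (- p3) * t2 + IZR p2 * t3)).
    { rewrite <- (Hid (fst c) (snd c)). unfold sf, t1, t2, t3.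
      izr. ring. }
    destruct (coef_bound q23 t1 ltac:(unfold t1; lra)) as [B1 S1].
    destruct (coef_bound (- p3) t2 ltac:(unfold t2; lra)) as [B2 S2].
    destruct (coef_bound p2 t3 ltac:(unfold t3; lra)) as [B3 S3].
    unfold P', Q'. rewrite !plus_IZR. rewrite E.
    destruct Hp23 as [Hn|Hn].
    - specialize (S3 Hn). lra.
    - assert (- p3 <> 0)%Z as Hn' by lia. specialize (S2 Hn'). lra. }
  set (tf := fun k1 k2 k3 : Z => (x0 * (k2 - al2 * k1) + y0 * (k3 - al3 * k1))%Z).
  assert (Gen : forall (F J : Z), (0 <= J)%Z ->
            (forall s : Z, H' - IZR P' < IZR s < H' - IZR Q' -> (F < s <= F + J)%Z) ->
            (Z.of_nat (length cs) <= J * g)%Z).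
  { intros F J HJ Hs.
    set (idx := fun k1 k2 k3 => ((sf k1 k2 k3 - F - 1) * g + Z.modulo (tf k1 k2 k3) g)%Z).
    assert (Hidx : forall c k1 k2 k3, cellp c k1 k2 k3 -> (0 <= idx k1 k2 k3 < J * g)%Z).
    { intros c k1 k2 k3 Hc. pose proof (Hs _ (Hsb _ _ _ _ Hc)) as Hr.
      pose proof (Z.mod_pos_bound (tf k1 k2 k3) g Hgpos). unfold idx. nia. }
    assert (HL : (length cs <= length (seq 0 (Z.to_nat (J * g))))%nat).
    { apply (count_le (fun (n : nat) c => exists k1 k2 k3, cellp c k1 k2 k3 /\ Z.of_nat n = idx k1 k2 k3)
                      (fun c d => ~ same_chamber [l1; l2; l3] c d)); auto.
      - intros n c c' [k1 [k2 [k3 [Hc Hn]]]] [k1' [k2' [k3' [Hc' Hn']]]] Hns. apply Hns.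
        rewrite Hn in Hn'. unfold idx in Hn'.
        pose proof (Z.mod_pos_bound (tf k1 k2 k3) g Hgpos).
        pose proof (Z.mod_pos_bound (tf k1' k2' k3') g Hgpos).
        assert (Eq1 : sf k1 k2 k3 = sf k1' k2' k3').
        { assert (((sf k1 k2 k3 - sf k1' k2' k3') * g)%Z = (Z.modulo (tf k1' k2' k3') g - Z.modulo (tf k1 k2 k3) g)%Z) by lia.
          assert (- g < (sf k1 k2 k3 - sf k1' k2' k3') * g < g)%Z by lia.
          nia. }
        assert (Eq2 : Z.modulo (tf k1 k2 k3) g = Z.modulo (tf k1' k2' k3') g) by (rewrite Eq1 in Hn'; lia).
        assert (Ht : (tf k1' k2' k3' - tf k1 k2 k3 = g * (tf k1' k2' k3' / g - tf k1 k2 k3 / g))%Z).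
        { pose proof (Z.div_mod (tf k1 k2 k3) g ltac:(lia)).
          pose proof (Z.div_mod (tf k1' k2' k3') g ltac:(lia)). lia. }
        destruct (lattice_alg a b u v a2 b2 a3 b3 p2 p3 g x0 y0 q23 k1 k2 k3 k1' k2' k3'
                    (tf k1' k2' k3' / g - tf k1 k2 k3 / g) Huv Hp2 Hp3 Hxy eq_refl Eq1)
          as [mm [nn [M1 [M2 M3]]]].
        { rewrite <- Ht. unfold tf, al2, al3. ring. }
        apply (cell_same_chamber _ c c' mm nn).
        intros l Hl. destruct Hc as [C1 [C2 C3]]. destruct Hc' as [C1' [C2' C3']].
        simpl in Hl. destruct Hl as [<-|[<-|[<-|[]]]].
        + exists k1. split; auto.
          assert (E : Lf l1 (fst c' - IZR mm) (snd c' - IZR nn) = Lf l1 (fst c') (snd c') - IZR (a * mm + b * nn)).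
          { unfold Lf, la, lb, lc, l1; simpl. rewrite plus_IZR, !mult_IZR. ring. }
          rewrite E. rewrite M1, plus_IZR in C1'. lra.
        + exists k2. split; auto.
          assert (E : Lf l2 (fst c' - IZR mm) (snd c' - IZR nn) = Lf l2 (fst c') (snd c') - IZR (a2 * mm + b2 * nn)).
          { unfold Lf, la, lb, lc, l2; simpl. rewrite plus_IZR, !mult_IZR. ring. }
          rewrite E. rewrite M2, plus_IZR in C2'. lra.
        + exists k3. split; auto.
          assert (E : Lf l3 (fst c' - IZR mm) (snd c' - IZR nn) = Lf l3 (fst c') (snd c') - IZR (a3 * mm + b3 * nn)).
          { unfold Lf, la, lb, lc, l3; simpl. rewrite plus_IZR, !mult_IZR. ring. }
          rewrite E. rewrite M3, plus_IZR in C3'. lra.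
      - intros c Hc. destruct (Hfl c Hc) as [k1 [k2 [k3 Hk]]].
        pose proof (Hidx _ _ _ _ Hk) as Hb.
        exists (Z.to_nat (idx k1 k2 k3)). split.
        + apply in_seq. lia.
        + exists k1, k2, k3. split; auto. lia. }
    rewrite length_seq in HL. nia. }
  assert (HS : (Z.abs (a * b2 - a2 * b) + Z.abs (a * b3 - a3 * b) + Z.abs (a2 * b3 - a3 * b2) = (P' - Q') * g)%Z).
  { rewrite Hp2, Hp3, Hd23. unfold P', Q'. rewrite !Z.abs_mul. rewrite (Z.abs_eq g) by lia. lia. }
  split.
  - rewrite HS. apply (Gen (Int_part (H' - IZR P'))).
    + unfold P', Q'. lia.
    + intros s [Hs1 Hs2]. destruct (base_Int_part (H' - IZR P')) as [I1 I2].
      split.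
      * apply lt_IZR. lra.
      * assert (IZR s < IZR (Int_part (H' - IZR P') + (P' - Q') + 1)).
        { rewrite !plus_IZR, minus_IZR. lra. }
        apply lt_IZR in H. lia.
  - intros [x [y [T1 [T2 T3]]]].
    destruct (on_tline_int _ _ _ T1) as [N1 E1].
    destruct (on_tline_int _ _ _ T2) as [N2 E2].
    destruct (on_tline_int _ _ _ T3) as [N3 E3].
    assert (HH : H' = IZR (q23 * N1 - p3 * N2 + p2 * N3)).
    { rewrite <- (Hid x y). fold l1 l2 l3 in E1, E2, E3. rewrite E1, E2, E3.
      izr. ring. }
    assert (HSg : (Z.abs (a * b2 - a2 * b) + Z.abs (a * b3 - a3 * b) + Z.abs (a2 * b3 - a3 * b2) - g = (P' - Q' - 1) * g)%Z) by lia.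
    rewrite HSg. apply (Gen (q23 * N1 - p3 * N2 + p2 * N3 - P')%Z).
    + assert (P' - Q' >= 1)%Z; [|lia]. unfold P', Q'. lia.
    + intros s [Hs1 Hs2]. rewrite HH in Hs1, Hs2. rewrite <- minus_IZR in Hs1, Hs2.
      apply lt_IZR in Hs1; apply lt_IZR in Hs2. lia.
Qed.

Lemma filter_all {A : Type} (f : A -> bool) (l : list A) :
  (forall x, In x l -> f x = true) -> filter f l = l.
Proof.
  induction l as [|x l IH]; simpl; intros H; auto.
  rewrite H by auto. rewrite IH; auto.
Qed.

Lemma FOP_impl {A : Type} (R R' : A -> A -> Prop) (l : list A) :
  (forall x y, R x y -> R' x y) -> ForallOrdPairs R l -> ForallOrdPairs R' l.
Proof.
  intros H. induction 1; constructor; auto.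
  rewrite Forall_forall in *; auto.
Qed.

Definition nzmod (nn k : nat) : bool := negb (Nat.eqb (k mod nn) 0).

Lemma filter_len (G nn : nat) : (1 <= nn)%nat ->
  length (filter (nzmod nn) (seq 0 (G * nn))) = (G * (nn - 1))%nat.
Proof.
  intros Hn. induction G as [|G IH]; simpl; auto.
  replace (nn + G * nn)%nat with (G * nn + nn)%nat by lia.
  rewrite seq_app, filter_app, length_app, IH.
  destruct nn as [|nn]; [lia|]. rewrite Nat.add_0_l.
  change (seq (G * S nn)%nat (S nn)) with ((G * S nn)%nat :: seq (S (G * S nn)) nn).
  cbn [filter]. unfold nzmod at 1. rewrite Nat.Div0.mod_mul. cbn [negb Nat.eqb].
  rewrite filter_all.
  - rewrite length_seq. lia.
  - intros x Hx. apply in_seq in Hx. unfold nzmod.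
    replace x with ((x - G * S nn) + G * S nn)%nat by lia.
    rewrite Nat.Div0.mod_add. rewrite Nat.mod_small by lia.
    destruct (x - G * S nn)%nat eqn:E; [lia|]. reflexivity.
Qed.

Definition Pt (a b u v : Z) (c Y : R) : R * R := (IZR u * c - IZR b * Y, IZR v * c + IZR a * Y).

Lemma Lf_Pt a b u v c l' Y :
  Lf l' (fst (Pt a b u v c Y)) (snd (Pt a b u v c Y)) =
  IZR (a * lb l' - la l' * b) * Y - (lc l' - IZR (la l' * u + lb l' * v) * c).
Proof. unfold Lf, Pt; simpl. izr. ring. Qed.

Lemma Pt_same a b u v c Y1 Y2 : (u * a + v * b = 1)%Z ->
  same_torus_pt (Pt a b u v c Y1) (Pt a b u v c Y2) -> exists z : Z, Y2 - Y1 = IZR z.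
Proof.
  intros Huv [m [n [H1 H2]]]. unfold Pt in *; simpl in *.
  exists (u * n - v * m)%Z.
  assert (E : IZR u * IZR a + IZR v * IZR b = 1) by (rewrite <- !mult_IZR, <- plus_IZR, Huv; auto).
  izr.
  transitivity ((Y2 - Y1) * (IZR u * IZR a + IZR v * IZR b)); [rewrite E; ring|].
  assert (IZR m = - IZR b * (Y2 - Y1)) by lra.
  assert (IZR n = IZR a * (Y2 - Y1)) by lra.
  rewrite H, H0. ring.
Qed.

Lemma Pt_shift a b u v c Y (z : Z) :
  same_torus_pt (Pt a b u v c Y) (Pt a b u v c (Y + IZR z)).
Proof.
  exists (- b * z)%Z, (a * z)%Z. unfold Pt; simpl. izr. split; ring.
Qed.

Definition Yf (Y0 : R) (be : Z) (k : nat) : R := Y0 + INR k / IZR be.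

Lemma Yf_diff Y0 be k1 k2 : (be <> 0)%Z ->
  (Z.of_nat k1 < Z.abs be)%Z -> (Z.of_nat k2 < Z.abs be)%Z -> k1 <> k2 ->
  forall z : Z, Yf Y0 be k2 - Yf Y0 be k1 <> IZR z.
Proof.
  intros Hb H1 H2 Hk z Hz. unfold Yf in Hz.
  assert (Hb' : IZR be <> 0) by (intro E; apply eq_IZR in E; lia).
  assert (E : INR k2 - INR k1 = IZR z * IZR be).
  { rewrite <- Hz. field; auto. }
  rewrite !INR_IZR_INZ, <- minus_IZR, <- mult_IZR in E. apply eq_IZR in E.
  assert (Z.of_nat k1 <> Z.of_nat k2) by (intro; apply Hk; lia).
  destruct (Z.eq_dec z 0) as [->|Hz0]; [lia|].
  assert (Z.abs (z * be) >= Z.abs be)%Z by (rewrite Z.abs_mul; nia).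
  lia.
Qed.

Lemma Ylist_bound (A : list tline) a b u v c (f0 : nat) (Ys : list R) :
  (u * a + v * b = 1)%Z ->
  (forall Y, In Y Ys -> is_vertex A (Pt a b u v c Y)) ->
  ForallOrdPairs (fun Y1 Y2 => forall z : Z, Y2 - Y1 <> IZR z) Ys ->
  num_vertices A f0 -> (length Ys <= f0)%nat.
Proof.
  intros Huv Hv Hd [vs [Hlen [_ [_ Hcov]]]].
  rewrite <- Hlen, <- (length_map (Pt a b u v c)).
  apply (count_le (fun v w => same_torus_pt v w) (fun w w' => ~ same_torus_pt w w')).
  - apply FOP_map. eapply FOP_impl; [|exact Hd].
    intros Y1 Y2 H Hs. destruct (Pt_same _ _ _ _ _ _ _ Huv Hs) as [z Hz]. eapply H; eauto.
  - intros v0 w w' H1 H2 H3. apply H3. eapply same_pt_trans; [apply same_pt_sym; eauto| eauto].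
  - intros w Hw. apply in_map_iff in Hw. destruct Hw as [Y [<- HY]].
    apply Hcov. auto.
Qed.

Definition triple (l l' l'' : tline) : Prop :=
  exists x y, on_tline l x y /\ on_tline l' x y /\ on_tline l'' x y.

Lemma vertex_bound (A : list tline) (l l' l'' : tline) (f0 : nat) :
  In l A -> In l' A -> In l'' A -> valid_tline l -> valid_tline l' -> valid_tline l'' ->
  ~ same_tline l l' -> ~ same_tline l l'' -> num_vertices A f0 ->
  (Z.abs (dd l l') + Z.abs (dd l l'') - Z.gcd (dd l l') (dd l l'') <= Z.of_nat f0)%Z /\
  (~ triple l l' l'' -> (Z.abs (dd l l') + Z.abs (dd l l'') <= Z.of_nat f0)%Z).
Proof.
  intros I1 I2 I3 V1 V2 V3 D12 D13 Hnv.
  pose proof V1 as V1'. unfold valid_tline in V1'.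
  destruct (Z.gcd_bezout _ _ _ V1') as [u [v Huv]].
  set (P := Pt (la l) (lb l) u v (lc l)).
  set (gam := fun l1 : tline => lc l1 - IZR (la l1 * u + lb l1 * v) * lc l).
  assert (HLf : forall l1 Y, Lf l1 (fst (P Y)) (snd (P Y)) = IZR (dd l l1) * Y - gam l1).
  { intros l1 Y. unfold P, gam, dd. rewrite Lf_Pt. ring. }
  assert (Honl : forall Y, on_tline l (fst (P Y)) (snd (P Y))).
  { intros Y. apply (int_on_tline _ _ _ 0%Z V1). rewrite HLf.
    unfold gam, dd. replace (la l * lb l - la l * lb l)%Z with 0%Z by ring.
    replace (la l * u + lb l * v)%Z with 1%Z by lia. simpl. ring. }
  assert (Hvert : forall l1 Y0 (N : Z) k, In l1 A -> valid_tline l1 -> ~ same_tline l l1 ->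
            (dd l l1 <> 0)%Z -> IZR (dd l l1) * Y0 - gam l1 = IZR N ->
            is_vertex A (P (Yf Y0 (dd l l1) k))).
  { intros l1 Y0 N k Il V Dl Hnz HN. exists l, l1. repeat split; auto.
    apply (int_on_tline _ _ _ (N + Z.of_nat k)%Z V). rewrite HLf. unfold Yf.
    rewrite plus_IZR, <- HN, <- INR_IZR_INZ. field.
    intro E; apply eq_IZR in E; auto. }
  assert (Hin : forall k n, In k (seq 0 (Z.to_nat n)) -> (0 <= n)%Z -> (Z.of_nat k < n)%Z).
  { intros k n Hk Hn. apply in_seq in Hk. lia. }
  assert (Part2 : ~ triple l l' l'' -> (Z.abs (dd l l') + Z.abs (dd l l'') <= Z.of_nat f0)%Z).
  { intros Hnt.
    set (YA := Yf (gam l' / IZR (dd l l')) (dd l l')).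
    set (YB := Yf (gam l'' / IZR (dd l l'')) (dd l l'')).
    set (Ys := map YA (seq 0 (Z.to_nat (Z.abs (dd l l')))) ++ map YB (seq 0 (Z.to_nat (Z.abs (dd l l''))))).
    assert (HL : (length Ys <= f0)%nat).
    { apply (Ylist_bound A (la l) (lb l) u v (lc l) f0 Ys Huv).
      - intros Y HY. apply in_app_or in HY. destruct HY as [HY|HY]; apply in_map_iff in HY;
          destruct HY as [k [<- Hk]]; apply in_seq in Hk.
        + assert (Hnz : (dd l l' <> 0)%Z) by lia.
          apply (Hvert l' _ 0%Z); auto. field. intro E; apply eq_IZR in E; auto.
        + assert (Hnz : (dd l l'' <> 0)%Z) by lia.
          apply (Hvert l'' _ 0%Z); auto. field. intro E; apply eq_IZR in E; auto.
      - apply FOP_app.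
        + apply FOP_map. apply FOP_nodup; [apply seq_NoDup|].
          intros k1 k2 Hk1 Hk2 Hne. apply Yf_diff; auto.
          * apply Hin in Hk1; lia.
          * apply Hin in Hk1; lia.
          * apply Hin in Hk2; lia.
        + apply FOP_map. apply FOP_nodup; [apply seq_NoDup|].
          intros k1 k2 Hk1 Hk2 Hne. apply Yf_diff; auto.
          * apply Hin in Hk1; lia.
          * apply Hin in Hk1; lia.
          * apply Hin in Hk2; lia.
        + intros Y1 Y2 HY1 HY2 z Hz. apply Hnt.
          apply in_map_iff in HY1; destruct HY1 as [k1 [<- Hk1]]; apply in_seq in Hk1.
          apply in_map_iff in HY2; destruct HY2 as [k2 [<- Hk2]]; apply in_seq in Hk2.
          assert (Hnz1 : (dd l l' <> 0)%Z) by lia.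
          assert (Hnz2 : (dd l l'' <> 0)%Z) by lia.
          exists (fst (P (YB k2))), (snd (P (YB k2))). split; [auto|split].
          * assert (Hs : same_torus_pt (P (YA k1)) (P (YB k2))).
            { replace (YB k2) with (YA k1 + IZR z) by lra. apply Pt_shift. }
            apply (on_tline_same _ _ _ Hs).
            apply (int_on_tline _ _ _ (Z.of_nat k1) V2). rewrite HLf. unfold YA, Yf.
            rewrite <- INR_IZR_INZ. field. intro E; apply eq_IZR in E; auto.
          * apply (int_on_tline _ _ _ (Z.of_nat k2) V3). rewrite HLf. unfold YB, Yf.
            rewrite <- INR_IZR_INZ. field. intro E; apply eq_IZR in E; auto.
      - exact Hnv. }
    unfold Ys in HL. rewrite length_app, !length_map, !length_seq in HL. lia. }
  split; [|exact Part2].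
  destruct (classic (triple l l' l'')) as [Ht|Hnt].
  2:{ pose proof (Part2 Hnt). pose proof (Z.gcd_nonneg (dd l l') (dd l l'')). lia. }
  destruct (Z.eq_dec (dd l l') 0) as [E1|E1].
  { assert (Z.gcd (dd l l') (dd l l'') = Z.abs (dd l l'')) by (rewrite E1; apply Z.gcd_0_l). lia. }
  destruct (Z.eq_dec (dd l l'') 0) as [E2|E2].
  { assert (Z.gcd (dd l l') (dd l l'') = Z.abs (dd l l')) by (rewrite E2; apply Z.gcd_0_r). lia. }
  destruct Ht as [x0 [y0 [T1 [T2 T3]]]].
  destruct (on_tline_int _ _ _ T1) as [N HN].
  set (Y0 := - IZR v * x0 + IZR u * y0).
  assert (HS0 : same_torus_pt (P Y0) (x0, y0)).
  { exists (u * N)%Z, (v * N)%Z. unfold P, Pt, Y0; simpl. unfold Lf in HN.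
    assert (E : IZR u * IZR (la l) + IZR v * IZR (lb l) = 1) by (rewrite <- !mult_IZR, <- plus_IZR, Huv; auto).
    rewrite !mult_IZR, <- HN. split.
    - transitivity (x0 * (IZR u * IZR (la l) + IZR v * IZR (lb l))); [rewrite E; ring| ring].
    - transitivity (y0 * (IZR u * IZR (la l) + IZR v * IZR (lb l))); [rewrite E; ring| ring]. }
  assert (O2 : on_tline l' (fst (P Y0)) (snd (P Y0))).
  { apply (on_tline_same _ _ _ (same_pt_sym _ _ HS0)). auto. }
  assert (O3 : on_tline l'' (fst (P Y0)) (snd (P Y0))).
  { apply (on_tline_same _ _ _ (same_pt_sym _ _ HS0)). auto. }
  destruct (on_tline_int _ _ _ O2) as [N2 HN2]. rewrite HLf in HN2.
  destruct (on_tline_int _ _ _ O3) as [N3 HN3]. rewrite HLf in HN3.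
  set (g := Z.gcd (dd l l') (dd l l'')) in *.
  assert (Hgpos : (0 < g)%Z).
  { pose proof (Z.gcd_nonneg (dd l l') (dd l l'')). fold g in H.
    destruct (Z.eq_dec g 0) as [E|E]; [|lia]. apply Z.gcd_eq_0 in E. lia. }
  destruct (Z.gcd_divide_r (dd l l') (dd l l'')) as [p Hp]. fold g in Hp.
  destruct (Z.gcd_bezout (dd l l') (dd l l'') g eq_refl) as [x1 [y1 Hxy1]].
  set (nn := Z.to_nat (Z.abs p)). set (Gn := Z.to_nat g).
  assert (Hnn : (1 <= nn)%nat) by (unfold nn; assert (p <> 0)%Z by (intro; subst; lia); lia).
  assert (HGn : (Gn * nn = Z.to_nat (Z.abs (dd l l'')))%nat).
  { unfold Gn, nn. rewrite Hp, Z.abs_mul, (Z.abs_eq g) by lia. rewrite Z2Nat.inj_mul by lia. lia. }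
  set (YA := Yf Y0 (dd l l')). set (YB := Yf Y0 (dd l l'')).
  set (KB := filter (nzmod nn) (seq 0 (Gn * nn))).
  assert (HKB : forall k, In k KB -> (Z.of_nat k < Z.abs (dd l l''))%Z /\ nzmod nn k = true).
  { intros k Hk. apply filter_In in Hk. destruct Hk as [Hk Hz]. split; auto.
    rewrite HGn in Hk. apply Hin in Hk; lia. }
  set (Ys := map YA (seq 0 (Z.to_nat (Z.abs (dd l l')))) ++ map YB KB).
  assert (HL : (length Ys <= f0)%nat).
  { apply (Ylist_bound A (la l) (lb l) u v (lc l) f0 Ys Huv).
    - intros Y HY. apply in_app_or in HY. destruct HY as [HY|HY]; apply in_map_iff in HY;
        destruct HY as [k [<- Hk]].
      + apply (Hvert l' _ N2); auto.
      + apply (Hvert l'' _ N3); auto.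
    - apply FOP_app.
      + apply FOP_map. apply FOP_nodup; [apply seq_NoDup|].
        intros k1 k2 Hk1 Hk2 Hne. apply Yf_diff; auto.
        * apply Hin in Hk1; lia.
        * apply Hin in Hk2; lia.
      + apply FOP_map. apply FOP_nodup; [apply NoDup_filter, seq_NoDup|].
        intros k1 k2 Hk1 Hk2 Hne. apply Yf_diff; auto.
        * apply HKB in Hk1; lia.
        * apply HKB in Hk2; lia.
      + intros Y1 Y2 HY1 HY2 z Hz.
        apply in_map_iff in HY1; destruct HY1 as [k1 [<- Hk1]].
        apply in_map_iff in HY2; destruct HY2 as [k2 [<- Hk2]].
        destruct (HKB k2 Hk2) as [_ Hnz].
        assert (Hs : same_torus_pt (P (YA k1)) (P (YB k2))).
        { replace (YB k2) with (YA k1 + IZR z) by lra. apply Pt_shift. }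
        assert (On : on_tline l' (fst (P (YB k2))) (snd (P (YB k2)))).
        { apply (on_tline_same _ _ _ Hs).
          apply (int_on_tline _ _ _ (N2 + Z.of_nat k1)%Z V2). rewrite HLf. unfold YA, Yf.
          rewrite plus_IZR, <- HN2, <- INR_IZR_INZ. field. intro E; apply eq_IZR in E; auto. }
        destruct (on_tline_int _ _ _ On) as [M HM]. rewrite HLf in HM. unfold YB, Yf in HM.
        assert (Hb2 : IZR (dd l l'') <> 0) by (intro E; apply eq_IZR in E; auto).
        assert (R1 : IZR (dd l l') * (INR k2 / IZR (dd l l'')) = IZR (M - N2)).
        { rewrite minus_IZR, <- HM, <- HN2. ring. }
        assert (R2 : IZR g * INR k2 = IZR (x1 * (M - N2) + y1 * Z.of_nat k2) * IZR (dd l l'')).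
        { rewrite plus_IZR, !mult_IZR, <- R1, <- INR_IZR_INZ, <- Hxy1. rewrite plus_IZR, !mult_IZR. field. auto. }
        rewrite INR_IZR_INZ, <- !mult_IZR in R2. apply eq_IZR in R2.
        rewrite Hp in R2.
        assert (Hk : Z.of_nat k2 = ((x1 * (M - N2) + y1 * Z.of_nat k2) * p)%Z).
        { apply (Z.mul_reg_l _ _ g); [lia|]. rewrite R2. ring. }
        unfold nzmod in Hnz.
        assert (Hm : (k2 mod nn = 0)%nat).
        { apply Nat2Z.inj. rewrite Nat2Z.inj_mod. unfold nn. rewrite Z2Nat.id by lia.
          apply Z.mod_divide; [lia|]. apply Z.divide_abs_l. rewrite Hk. apply Z.divide_factor_r. }
        rewrite Hm in Hnz. simpl in Hnz. discriminate.
    - exact Hnv. }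
  unfold Ys in HL. rewrite length_app, !length_map, length_seq in HL. unfold KB in HL.
  rewrite filter_len in HL by auto.
  assert (Z.abs (dd l l'') = Z.of_nat Gn * Z.of_nat nn)%Z.
  { rewrite <- Nat2Z.inj_mul, HGn. lia. }
  unfold Gn in H. rewrite Z2Nat.id in H by lia. fold g. nia.
Qed.

Lemma dd_anti l l' : dd l' l = (- dd l l')%Z.
Proof. unfold dd. ring. Qed.

Lemma gcd_div3 (l l' l'' : tline) : valid_tline l ->
  (Z.gcd (dd l l') (dd l l'') | dd l' l'')%Z.
Proof.
  intros V. unfold valid_tline in V. destruct (Z.gcd_bezout _ _ _ V) as [u [v Huv]].
  assert (E : dd l' l'' = ((la l' * u + lb l' * v) * dd l l'' - (la l'' * u + lb l'' * v) * dd l l')%Z).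
  { transitivity ((u * la l + v * lb l) * dd l' l'')%Z; [rewrite Huv; ring|]. unfold dd. ring. }
  rewrite E. apply Z.divide_sub_r; apply Z.divide_mul_r; [apply Z.gcd_divide_r|apply Z.gcd_divide_l].
Qed.

Lemma gcd_sym3 (l l' l'' : tline) : valid_tline l -> valid_tline l' ->
  Z.gcd (dd l l') (dd l l'') = Z.gcd (dd l' l) (dd l' l'').
Proof.
  intros V V'. apply Z.divide_antisym_nonneg; try apply Z.gcd_nonneg.
  - apply Z.gcd_greatest.
    + rewrite dd_anti. apply Z.divide_opp_r. apply Z.gcd_divide_l.
    + apply gcd_div3; auto.
  - apply Z.gcd_greatest.
    + rewrite <- (Z.opp_involutive (dd l l')), <- dd_anti. apply Z.divide_opp_r. apply Z.gcd_divide_l.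
    + apply gcd_div3; auto.
Qed.

Lemma even_sign e x : (e = 1 \/ e = -1)%Z -> Z.even (e * x) = Z.even x.
Proof.
  intros [->| ->]; [rewrite Z.mul_1_l; auto|].
  replace (-1 * x)%Z with (- x)%Z by ring. apply Z.even_opp.
Qed.

Lemma prim_not_even a b : Z.gcd a b = 1%Z -> Z.even a = true -> Z.even b = true -> False.
Proof.
  intros G Ea Eb. apply Z.even_spec in Ea; apply Z.even_spec in Eb.
  destruct Ea as [p Hp]; destruct Eb as [q Hq].
  assert (H : (2 | Z.gcd a b)%Z) by (apply Z.gcd_greatest; [exists p|exists q]; lia).
  rewrite G in H. destruct H as [k Hk]. lia.
Qed.

Lemma parity_lemma (l1 l2 l3 : tline) (G : Z) :
  valid_tline l1 -> valid_tline l2 -> valid_tline l3 -> (0 < G)%Z ->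
  Z.abs (dd l1 l2) = G -> Z.abs (dd l1 l3) = G -> Z.abs (dd l2 l3) = G -> Z.odd G = true.
Proof.
  intros V1 V2 V3 HG H12 H13 H23.
  destruct (Z.odd G) eqn:Eo; auto. exfalso.
  assert (Ev : Z.even G = true) by (rewrite <- Z.negb_odd, Eo; auto).
  assert (S12 : exists e, (dd l1 l2 = e * G /\ (e = 1 \/ e = -1))%Z) by (exists (Z.sgn (dd l1 l2)); lia).
  assert (S13 : exists e, (dd l1 l3 = e * G /\ (e = 1 \/ e = -1))%Z) by (exists (Z.sgn (dd l1 l3)); lia).
  assert (S23 : exists e, (dd l2 l3 = e * G /\ (e = 1 \/ e = -1))%Z) by (exists (Z.sgn (dd l2 l3)); lia).
  destruct S12 as [e3 [D12 E3]]; destruct S13 as [e2 [D13 E2]]; destruct S23 as [e1 [D23 E1]].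
  unfold valid_tline in *.
  destruct l1 as [[a1 b1] c1]; destruct l2 as [[a2 b2] c2]; destruct l3 as [[a3 b3] c3].
  unfold dd, la, lb in *; simpl in *.
  assert (IA : (G * (e1 * a1 - e2 * a2 + e3 * a3) = 0)%Z).
  { transitivity ((e1 * G) * a1 - (e2 * G) * a2 + (e3 * G) * a3)%Z; [ring|].
    rewrite <- D12, <- D13, <- D23. ring. }
  assert (IB : (G * (e1 * b1 - e2 * b2 + e3 * b3) = 0)%Z).
  { transitivity ((e1 * G) * b1 - (e2 * G) * b2 + (e3 * G) * b3)%Z; [ring|].
    rewrite <- D12, <- D13, <- D23. ring. }
  apply Z.mul_eq_0 in IA; apply Z.mul_eq_0 in IB.
  destruct IA as [|IA]; [lia|]. destruct IB as [|IB]; [lia|].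
  assert (PA : Z.even (e1 * a1 - e2 * a2 + e3 * a3) = true) by (rewrite IA; auto).
  assert (PB : Z.even (e1 * b1 - e2 * b2 + e3 * b3) = true) by (rewrite IB; auto).
  rewrite Z.even_add, Z.even_sub, !even_sign in PA by auto.
  rewrite Z.even_add, Z.even_sub, !even_sign in PB by auto.
  assert (PD : Z.even (a1 * b2 - a2 * b1) = true) by (rewrite D12, Z.even_mul, Ev; apply Bool.orb_true_r).
  rewrite Z.even_sub, !Z.even_mul in PD.
  pose proof (prim_not_even _ _ V1) as N1. pose proof (prim_not_even _ _ V2) as N2.
  pose proof (prim_not_even _ _ V3) as N3.
  destruct (Z.even a1), (Z.even b1), (Z.even a2), (Z.even b2), (Z.even a3), (Z.even b3);
    simpl in *; try discriminate; auto.
Qed.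

Lemma triple_perm1 l1 l2 l3 : triple l1 l2 l3 -> triple l2 l1 l3.
Proof. intros [x [y [A [B C]]]]. exists x, y. auto. Qed.
Lemma triple_perm2 l1 l2 l3 : triple l1 l2 l3 -> triple l3 l1 l2.
Proof. intros [x [y [A [B C]]]]. exists x, y. auto. Qed.

Lemma same_tline_sym l l' : ~ same_tline l l' -> ~ same_tline l' l.
Proof. intros H H'. apply H. intros x y. specialize (H' x y). tauto. Qed.

Lemma only_if (f0 : nat) (Hf0 : (0 < f0)%nat) :
  (exists A : list tline,
     toric_arrangement A /\ length A = 3%nat /\
     num_vertices A f0 /\ num_chambers A (2 * f0)%nat) -> Nat.odd f0 = true.
Proof.
  intros [A [[HF [HP Hess]] [Hlen [Hv Hc]]]].
  destruct A as [|l1 [|l2 [|l3 [|l4 A]]]]; simpl in Hlen; try discriminate.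
  rewrite Forall_forall in HF.
  assert (V1 : valid_tline l1) by (apply HF; simpl; auto).
  assert (V2 : valid_tline l2) by (apply HF; simpl; auto).
  assert (V3 : valid_tline l3) by (apply HF; simpl; auto).
  inversion HP as [|? ? F1 P1]; subst. inversion P1 as [|? ? F2 P2]; subst.
  rewrite Forall_forall in F1, F2.
  assert (D12 : ~ same_tline l1 l2) by (apply F1; simpl; auto).
  assert (D13 : ~ same_tline l1 l3) by (apply F1; simpl; auto).
  assert (D23 : ~ same_tline l2 l3) by (apply F2; simpl; auto).
  pose proof (same_tline_sym _ _ D12) as D21.
  pose proof (same_tline_sym _ _ D13) as D31.
  pose proof (same_tline_sym _ _ D23) as D32.
  assert (Hnz : (dd l1 l2 <> 0 \/ dd l1 l3 <> 0)%Z).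
  { destruct (Z.eq_dec (dd l1 l2) 0) as [E12|E12]; [|auto].
    destruct (Z.eq_dec (dd l1 l3) 0) as [E13|E13]; [|auto]. exfalso.
    assert (E23 : dd l2 l3 = 0%Z).
    { pose proof V1 as V1'. unfold valid_tline in V1'.
      assert (IA : (dd l2 l3 * la l1 = 0)%Z).
      { transitivity (dd l2 l3 * la l1 - dd l1 l3 * la l2 + dd l1 l2 * la l3)%Z;
          [rewrite E12, E13; ring| unfold dd; ring]. }
      assert (IB : (dd l2 l3 * lb l1 = 0)%Z).
      { transitivity (dd l2 l3 * lb l1 - dd l1 l3 * lb l2 + dd l1 l2 * lb l3)%Z;
          [rewrite E12, E13; ring| unfold dd; ring]. }
      apply Z.mul_eq_0 in IA; apply Z.mul_eq_0 in IB.
      destruct IA as [|IA]; auto. destruct IB as [|IB]; auto.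
      rewrite IA, IB in V1'. simpl in V1'. discriminate. }
    destruct Hess as [l [l' [Il [Il' Hnp]]]]. apply Hnp. unfold parallel.
    unfold dd in E12, E13, E23.
    simpl in Il, Il'.
    destruct Il as [<-|[<-|[<-|[]]]]; destruct Il' as [<-|[<-|[<-|[]]]]; lia. }
  destruct Hc as [cs [Hcl [Hcoff [Hcpw _]]]].
  destruct (chamber_bound l1 l2 l3 cs V1 V2 V3 Hnz Hcoff Hcpw) as [C1 C2].
  rewrite Hcl in C1, C2.
  assert (I1 : In l1 [l1; l2; l3]) by (simpl; auto).
  assert (I2 : In l2 [l1; l2; l3]) by (simpl; auto).
  assert (I3 : In l3 [l1; l2; l3]) by (simpl; auto).
  destruct (vertex_bound _ l1 l2 l3 f0 I1 I2 I3 V1 V2 V3 D12 D13 Hv) as [B1 B1'].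
  destruct (vertex_bound _ l2 l1 l3 f0 I2 I1 I3 V2 V1 V3 D21 D23 Hv) as [B2 B2'].
  destruct (vertex_bound _ l3 l1 l2 f0 I3 I1 I2 V3 V1 V2 D31 D32 Hv) as [B3 B3'].
  rewrite (dd_anti l1 l2) in B2, B2'.
  rewrite (dd_anti l1 l3), (dd_anti l2 l3) in B3, B3'.
  rewrite !Z.abs_opp in B2, B2', B3, B3'.
  set (G := Z.gcd (dd l1 l2) (dd l1 l3)) in *.
  assert (G2 : Z.gcd (- dd l1 l2) (dd l2 l3) = G).
  { unfold G. rewrite (gcd_sym3 l1 l2 l3 V1 V2). rewrite (dd_anti l1 l2). auto. }
  assert (G3 : Z.gcd (- dd l1 l3) (- dd l2 l3) = G).
  { unfold G. rewrite (gcd_sym3 l1 l2 l3 V1 V2).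
    rewrite (Z.gcd_comm (dd l2 l1) (dd l2 l3)), (gcd_sym3 l2 l3 l1 V2 V3).
    rewrite (dd_anti l2 l3), (dd_anti l1 l3). apply Z.gcd_comm. }
  rewrite G2 in B2. rewrite G3 in B3.
  assert (HG0 : (0 < G)%Z).
  { pose proof (Z.gcd_nonneg (dd l1 l2) (dd l1 l3)). fold G in H.
    destruct (Z.eq_dec G 0) as [E|E]; [|lia]. apply Z.gcd_eq_0 in E. lia. }
  destruct (Z.gcd_divide_l (dd l1 l2) (dd l1 l3)) as [x' Hx]. fold G in Hx.
  destruct (Z.gcd_divide_r (dd l1 l2) (dd l1 l3)) as [y' Hy]. fold G in Hy.
  destruct (gcd_div3 l1 l2 l3 V1) as [z' Hz]. fold G in Hz.
  set (x := Z.abs (dd l1 l2)) in *. set (y := Z.abs (dd l1 l3)) in *. set (z := Z.abs (dd l2 l3)) in *.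
  assert (Ex : x = (G * Z.abs x')%Z) by (unfold x; rewrite Hx, Z.abs_mul, (Z.abs_eq G) by lia; ring).
  assert (Ey : y = (G * Z.abs y')%Z) by (unfold y; rewrite Hy, Z.abs_mul, (Z.abs_eq G) by lia; ring).
  assert (Ez : z = (G * Z.abs z')%Z) by (unfold z; rewrite Hz, Z.abs_mul, (Z.abs_eq G) by lia; ring).
  destruct (classic (triple l1 l2 l3)) as [Ht|Hnt].
  2:{ exfalso.
      assert (N2 : ~ triple l2 l1 l3) by (intro T; apply Hnt; apply triple_perm1; auto).
      assert (N3 : ~ triple l3 l1 l2) by (intro T; apply Hnt; do 2 apply triple_perm2; auto).
      specialize (B1' Hnt). specialize (B2' N2). specialize (B3' N3). lia. }
  specialize (C2 Ht).
  assert (Hle : (x <= G /\ y <= G /\ z <= G)%Z) by lia.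
  assert (Cx : (Z.abs x' = 0 \/ Z.abs x' = 1)%Z) by (clear - Ex Hle HG0; nia).
  assert (Cy : (Z.abs y' = 0 \/ Z.abs y' = 1)%Z) by (clear - Ey Hle HG0; nia).
  assert (Cz : (Z.abs z' = 0 \/ Z.abs z' = 1)%Z) by (clear - Ez Hle HG0; nia).
  assert (Fin : (x = G /\ y = G /\ z = G /\ Z.of_nat f0 = G)%Z).
  { destruct Cx as [Cx|Cx]; rewrite Cx in Ex; destruct Cy as [Cy|Cy]; rewrite Cy in Ey;
      destruct Cz as [Cz|Cz]; rewrite Cz in Ez; lia. }
  destruct Fin as [Fx [Fy [Fz Ff]]].
  pose proof (parity_lemma l1 l2 l3 G V1 V2 V3 HG0 Fx Fy Fz) as Hodd.
  apply Z.odd_spec in Hodd. destruct Hodd as [m Hm].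
  apply Nat.odd_spec. exists (Z.to_nat m). clear - Ff Hm HG0. lia.
Qed.

Lemma floor_shift_eq (a b c : Z) (r : R) :
  IZR a < r < IZR a + 1 -> IZR b < r - IZR c < IZR b + 1 -> (a - c = b)%Z.
Proof.
  intros [H1 H2] [H3 H4].
  assert (IZR b < IZR (a - c + 1)) by (rewrite plus_IZR, minus_IZR; lra).
  assert (IZR (a - c - 1) < IZR b) by (rewrite !minus_IZR; lra).
  apply lt_IZR in H; apply lt_IZR in H0. lia.
Qed.

Lemma half_not_int (N : Z) : 1 / 2 <> IZR N.
Proof. apply (not_int_between 0). lra. Qed.

Section IfDir.
Variable f0 : nat.
Hypothesis Hf0 : (0 < f0)%nat.
Hypothesis Hodd : Nat.odd f0 = true.

Let d : Z := Z.of_nat f0.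
Let dR : R := IZR d.
Let l1 : tline := ((1%Z, 0%Z), 0).
Let l2 : tline := ((1%Z, d), 0).
Let l3 : tline := ((2%Z, d), 0).
Let A : list tline := [l1; l2; l3].

Lemma dpos : (0 < d)%Z. Proof. unfold d. lia. Qed.
Lemma dRpos : 0 < dR. Proof. unfold dR. apply IZR_lt. apply dpos. Qed.
Lemma dRnz : dR <> 0. Proof. pose proof dRpos. lra. Qed.

Lemma Lf1 x y : Lf l1 x y = x. Proof. unfold Lf, l1, la, lb, lc; simpl. ring. Qed.
Lemma Lf2 x y : Lf l2 x y = x + dR * y. Proof. unfold Lf, l2, la, lb, lc; simpl. unfold dR. ring. Qed.
Lemma Lf3 x y : Lf l3 x y = 2 * x + dR * y. Proof. unfold Lf, l3, la, lb, lc; simpl. unfold dR. ring. Qed.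

Lemma V1 : valid_tline l1. Proof. reflexivity. Qed.
Lemma V2 : valid_tline l2. Proof. unfold valid_tline, l2, la, lb; simpl. apply Z.gcd_1_l. Qed.
Lemma V3 : valid_tline l3.
Proof.
  unfold valid_tline, l3, la, lb, d; cbn [fst snd]. apply Nat.odd_spec in Hodd. destruct Hodd as [k Hk].
  replace (Z.of_nat f0) with (1 + Z.of_nat k * 2)%Z by lia.
  rewrite Z.gcd_add_mult_diag_r. reflexivity.
Qed.
Lemma VA : Forall valid_tline A.
Proof. unfold A. constructor; [apply V1|constructor; [apply V2|constructor; [apply V3|constructor]]]. Qed.

Lemma on1 x y : on_tline l1 x y <-> exists N : Z, x = IZR N.
Proof.
  split; [intros H; destruct (on_tline_int _ _ _ H) as [N HN]; rewrite Lf1 in HN; eauto|].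
  intros [N HN]. apply (int_on_tline _ _ _ N V1). rewrite Lf1. auto.
Qed.
Lemma on2 x y : on_tline l2 x y <-> exists N : Z, x + dR * y = IZR N.
Proof.
  split; [intros H; destruct (on_tline_int _ _ _ H) as [N HN]; rewrite Lf2 in HN; eauto|].
  intros [N HN]. apply (int_on_tline _ _ _ N V2). rewrite Lf2. auto.
Qed.
Lemma on3 x y : on_tline l3 x y <-> exists N : Z, 2 * x + dR * y = IZR N.
Proof.
  split; [intros H; destruct (on_tline_int _ _ _ H) as [N HN]; rewrite Lf3 in HN; eauto|].
  intros [N HN]. apply (int_on_tline _ _ _ N V3). rewrite Lf3. auto.
Qed.

Lemma ns12 : ~ same_tline l1 l2.
Proof.
  intros H. destruct (proj1 (H 0 (1 / (2 * dR)))) as [m [n Hmn]].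
  - apply on1. exists 0%Z. auto.
  - assert (Hon : on_tline l2 0 (1 / (2 * dR))) by (exists m, n; auto).
    apply on2 in Hon. destruct Hon as [N HN]. apply (half_not_int N). rewrite <- HN.
    field. apply dRnz.
Qed.
Lemma ns13 : ~ same_tline l1 l3.
Proof.
  intros H. destruct (proj1 (H 0 (1 / (2 * dR)))) as [m [n Hmn]].
  - apply on1. exists 0%Z. auto.
  - assert (Hon : on_tline l3 0 (1 / (2 * dR))) by (exists m, n; auto).
    apply on3 in Hon. destruct Hon as [N HN]. apply (half_not_int N). rewrite <- HN.
    field. apply dRnz.
Qed.
Lemma ns23 : ~ same_tline l2 l3.
Proof.
  intros H. destruct (proj1 (H (1/2) (- 1 / (2 * dR)))) as [m [n Hmn]].
  - apply on2. exists 0%Z. field. apply dRnz.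
  - assert (Hon : on_tline l3 (1/2) (- 1 / (2 * dR))) by (exists m, n; auto).
    apply on3 in Hon. destruct Hon as [N HN]. apply (half_not_int N). rewrite <- HN.
    field. apply dRnz.
Qed.

Lemma arr : toric_arrangement A.
Proof.
  split; [apply VA|split].
  - unfold A. constructor.
    + constructor; [apply ns12| constructor; [apply ns13|constructor]].
    + constructor; [constructor; [apply ns23|constructor]|constructor; constructor].
  - exists l1, l2. unfold A. split; [simpl; auto|split; [simpl; auto|]].
    unfold parallel, l1, l2, la, lb, d; cbn [fst snd]. lia.
Qed.

Lemma vertex_char p : is_vertex A p ->
  exists X Y : Z, fst p = IZR X /\ dR * snd p = IZR Y.
Proof.
  intros [l [l' [Il [Il' [Hs [Ho Ho']]]]]].
  unfold A in Il, Il'. simpl in Il, Il'.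
  assert (Hrefl : forall l0, ~ ~ same_tline l0 l0) by (intros l0 H; apply H; intros x y; tauto).
  destruct Il as [<-|[<-|[<-|[]]]]; destruct Il' as [<-|[<-|[<-|[]]]];
    try (exfalso; apply (Hrefl _ Hs)).
  - apply on1 in Ho; apply on2 in Ho'. destruct Ho as [N1 H1]; destruct Ho' as [N2 H2].
    exists N1, (N2 - N1)%Z. rewrite minus_IZR. lra.
  - apply on1 in Ho; apply on3 in Ho'. destruct Ho as [N1 H1]; destruct Ho' as [N2 H2].
    exists N1, (N2 - 2 * N1)%Z. rewrite minus_IZR, mult_IZR. lra.
  - apply on2 in Ho; apply on1 in Ho'. destruct Ho as [N1 H1]; destruct Ho' as [N2 H2].
    exists N2, (N1 - N2)%Z. rewrite minus_IZR. lra.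
  - apply on2 in Ho; apply on3 in Ho'. destruct Ho as [N1 H1]; destruct Ho' as [N2 H2].
    exists (N2 - N1)%Z, (2 * N1 - N2)%Z. rewrite !minus_IZR, mult_IZR. lra.
  - apply on3 in Ho; apply on1 in Ho'. destruct Ho as [N1 H1]; destruct Ho' as [N2 H2].
    exists N2, (N1 - 2 * N2)%Z. rewrite minus_IZR, mult_IZR. lra.
  - apply on3 in Ho; apply on2 in Ho'. destruct Ho as [N1 H1]; destruct Ho' as [N2 H2].
    exists (N1 - N2)%Z, (2 * N2 - N1)%Z. rewrite !minus_IZR, mult_IZR. lra.
Qed.

Lemma verts : num_vertices A f0.
Proof.
  exists (map (fun k => (0, Yf 0 d k)) (seq 0 f0)).
  split; [rewrite length_map, length_seq; auto|split; [|split]].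
  - intros v Hv. apply in_map_iff in Hv. destruct Hv as [k [<- Hk]].
    exists l1, l2. unfold A. repeat split; simpl; auto; [apply ns12| |].
    + apply on1. exists 0%Z. auto.
    + apply on2. exists (Z.of_nat k). unfold Yf. rewrite <- INR_IZR_INZ. unfold dR.
      field. apply dRnz.
  - apply FOP_map. apply FOP_nodup; [apply seq_NoDup|].
    intros k1 k2 Hk1 Hk2 Hne [m [n [_ Hn]]]. simpl in Hn.
    apply in_seq in Hk1; apply in_seq in Hk2.
    apply (Yf_diff 0 d k1 k2) with n; auto.
    + pose proof dpos. lia.
    + unfold d; lia.
    + unfold d; lia.
    + lra.
  - intros p Hp. destruct (vertex_char p Hp) as [X [Y [HX HY]]].
    pose proof dpos as Hd.
    exists (0, Yf 0 d (Z.to_nat (Y mod d))). split.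
    + apply (in_map (fun k => (0, Yf 0 d k))). apply in_seq. pose proof (Z.mod_pos_bound Y d Hd). unfold d in *. lia.
    + exists X, (Y / d)%Z. simpl. split; [lra|].
      pose proof (Z.mod_pos_bound Y d Hd).
      unfold Yf. rewrite INR_IZR_INZ, Z2Nat.id by lia.
      assert (E : IZR Y = IZR d * IZR (Y / d) + IZR (Y mod d)).
      { rewrite <- mult_IZR, <- plus_IZR, <- Z.div_mod; auto; lia. }
      apply (Rmult_eq_reg_l dR); [|apply dRnz]. rewrite HY. unfold dR in *. rewrite E.
      field. apply dRnz.
Qed.

Definition rep (i : nat) : R * R :=
  if Nat.eqb (i mod 2) 0 then (1/4, (INR (i / 2) + 1/4) / dR) else (3/4, INR (i / 2) / dR).

Lemma rep_floors i :
  0 < Lf l1 (fst (rep i)) (snd (rep i)) < 1 /\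
  IZR (Z.of_nat (i / 2)) < Lf l2 (fst (rep i)) (snd (rep i)) < IZR (Z.of_nat (i / 2)) + 1 /\
  IZR (Z.of_nat (i / 2) + Z.of_nat (i mod 2)) < Lf l3 (fst (rep i)) (snd (rep i))
    < IZR (Z.of_nat (i / 2) + Z.of_nat (i mod 2)) + 1.
Proof.
  rewrite Lf1, Lf2, Lf3. pose proof dRnz.
  unfold rep. pose proof (Nat.mod_upper_bound i 2 ltac:(lia)).
  rewrite plus_IZR, <- !INR_IZR_INZ.
  destruct (Nat.eqb_spec (i mod 2) 0) as [E|E]; cbn [fst snd].
  - rewrite E. change (INR 0) with 0.
    replace (dR * ((INR (i / 2) + 1 / 4) / dR)) with (INR (i / 2) + 1/4) by (field; auto).
    lra.
  - assert (E1 : (i mod 2 = 1)%nat) by lia. rewrite E1. change (INR 1) with 1.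
    replace (dR * (INR (i / 2) / dR)) with (INR (i / 2)) by (field; auto).
    lra.
Qed.

Lemma rep_off i : ~ on_arr A (fst (rep i)) (snd (rep i)).
Proof.
  intros [l [Il Ho]]. destruct (on_tline_int _ _ _ Ho) as [N HN].
  destruct (rep_floors i) as [F1 [F2 F3]].
  unfold A in Il; simpl in Il. destruct Il as [<-|[<-|[<-|[]]]].
  - eapply (not_int_between 0 N); [|exact HN]. lra.
  - exact (not_int_between _ N _ F2 HN).
  - exact (not_int_between _ N _ F3 HN).
Qed.

Lemma rep_distinct i1 i2 : (i1 < 2 * f0)%nat -> (i2 < 2 * f0)%nat ->
  same_chamber A (rep i1) (rep i2) -> i1 = i2.
Proof.
  intros H1 H2 Hs. destruct (chamber_cell A _ _ VA Hs) as [m [n Hmn]].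
  destruct (rep_floors i1) as [F1 [F2 F3]]. destruct (rep_floors i2) as [G1 [G2 G3]].
  assert (Il1 : In l1 A) by (unfold A; simpl; auto).
  assert (Il2 : In l2 A) by (unfold A; simpl; auto).
  assert (Il3 : In l3 A) by (unfold A; simpl; auto).
  assert (F1' : IZR 0 < Lf l1 (fst (rep i1)) (snd (rep i1)) < IZR 0 + 1) by lra.
  assert (G1' : IZR 0 < Lf l1 (fst (rep i2)) (snd (rep i2)) < IZR 0 + 1) by lra.
  pose proof (Hmn l1 Il1 0%Z F1') as M1.
  pose proof (Hmn l2 Il2 _ F2) as M2. pose proof (Hmn l3 Il3 _ F3) as M3.
  unfold l1, l2, l3, la, lb in M1, M2, M3; cbn [fst snd] in M1, M2, M3.
  pose proof (floor_shift_eq 0 0 _ _ G1' M1) as E1.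
  pose proof (floor_shift_eq _ _ _ _ G2 M2) as E2.
  pose proof (floor_shift_eq _ _ _ _ G3 M3) as E3.
  pose proof (Nat.mod_upper_bound i1 2 ltac:(lia)). pose proof (Nat.mod_upper_bound i2 2 ltac:(lia)).
  pose proof (Nat.div_mod_eq i1 2). pose proof (Nat.div_mod_eq i2 2).
  assert (J1 : (i1 / 2 < f0)%nat) by (apply Nat.Div0.div_lt_upper_bound; lia).
  assert (J2 : (i2 / 2 < f0)%nat) by (apply Nat.Div0.div_lt_upper_bound; lia).
  assert (Hm : m = 0%Z) by lia. subst m.
  assert (He : Z.of_nat (i1 mod 2) = Z.of_nat (i2 mod 2)) by lia.
  assert (Hn : n = 0%Z).
  { unfold d in *. destruct (Z.eq_dec n 0); auto. exfalso. nia. }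
  subst n. lia.
Qed.

Lemma chambers : num_chambers A (2 * f0).
Proof.
  set (cs := map rep (seq 0 (2 * f0))).
  assert (Hoff : forall c, In c cs -> ~ on_arr A (fst c) (snd c)).
  { intros c Hc. apply in_map_iff in Hc. destruct Hc as [i [<- _]]. apply rep_off. }
  assert (Hpw : ForallOrdPairs (fun c d => ~ same_chamber A c d) cs).
  { apply FOP_map. apply FOP_nodup; [apply seq_NoDup|].
    intros i1 i2 Hi1 Hi2 Hne Hs. apply in_seq in Hi1; apply in_seq in Hi2.
    apply Hne. apply rep_distinct; auto; lia. }
  exists cs. split; [unfold cs; rewrite length_map, length_seq; auto|].
  split; [auto|split; [auto|]].
  intros p Hp. apply NNPP. intros Hn.
  assert (Hnz : (dd l1 l2 <> 0 \/ dd l1 l3 <> 0)%Z).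
  { left. unfold dd, l1, l2, la, lb, d; cbn [fst snd]. lia. }
  assert (Ht : exists x y, on_tline l1 x y /\ on_tline l2 x y /\ on_tline l3 x y).
  { exists 0, 0. split; [apply on1|split; [apply on2|apply on3]]; exists 0%Z; ring. }
  destruct (chamber_bound l1 l2 l3 (cs ++ [p]) V1 V2 V3 Hnz) as [_ B].
  - intros c Hc. apply in_app_or in Hc. destruct Hc as [Hc|[<-|[]]]; auto.
  - apply FOP_app; auto.
    + constructor; constructor.
    + intros x y Hx [<-|[]] Hs. apply Hn. exists x. auto.
  - specialize (B Ht). rewrite length_app in B. simpl in B.
    unfold cs in B. rewrite length_map, length_seq in B.
    unfold dd, l1, l2, l3, la, lb in B; cbn [fst snd] in B.
    replace (1 * d - 1 * 0)%Z with d in B by ring. replace (1 * d - 2 * 0)%Z with d in B by ring.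
    rewrite Z.gcd_diag in B. pose proof dpos. unfold d in *. lia.
Qed.

End IfDir.

Lemma if_dir (f0 : nat) (Hf0 : (0 < f0)%nat) : Nat.odd f0 = true ->
  exists A : list tline,
     toric_arrangement A /\ length A = 3%nat /\
     num_vertices A f0 /\ num_chambers A (2 * f0)%nat.
Proof.
  intros Ho. eexists. split; [eapply arr; eauto|split; [reflexivity|split]].
  - eapply verts; eauto.
  - eapply chambers; eauto.
Qed.

Theorem mainTheorem8 (f0 : nat) (Hf0 : (0 < f0)%nat) :
  (exists A : list tline,
     toric_arrangement A /\ length A = 3%nat /\
     num_vertices A f0 /\ num_chambers A (2 * f0)%nat)
  <-> Nat.odd f0 = true.
Proof.
  split; [apply only_if; auto| apply if_dir; auto].
Qed.
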